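(* Let $(X,\phi)$ be a ranked convex geometry with critical base $\Sigma$, and let $j\in X$. Let $\mathrm{pred}(j)=\{a\in X:\exists A\to j\in\Sigma,\ a\in A\}$ and let $\mathcal{H}_j$ be the hypergraph with vertex set $X\setminus\bigcap_{M\in j^{\nearrow}}M$ and edge set $\{X\setminus M: M\in j^{\nearrow}\}$. Then a set $A\subseteq X$ is a critical minimal generator of $j$ if and only if $A\in Tr(\mathcal{H}_j[\mathrm{pred}(j)])$.
   Context: $X$ is finite. A closure operator $\phi$ on $X$ is extensive, monotone and idempotent; $(X,\phi)$ is standard if $\phi(\emptyset)=\emptyset$ and $\phi(\{x\})\setminus\{x\}$ is closed for all $x$. A unit implicational base $\Sigma$ (implications $A\to b$, $A\subseteq X$, $b\in X$) is an implicational base of $(X,\phi)$ if its closed sets (sets $S$ with $A\not\subseteq S$ or $b\in S$ for each $A\to b\in\Sigma$) are exactly the closed sets of $\phi$. $\Sigma$ is ranked if there is $\rho:X\to\mathbb{N}$ with $\rho(a)=\rho(b)+1$ whenever $A\to b\in\Sigma$ and $a\in A$. A ranked convex geometry is a standard closure space admitting a ranked implicational base. $A$ is a minimal generator of $b$ if $b\in\phi(A)$ and $b\notin\phi(A\setminus\{x\})$ for all $x\in A$. The critical base is the unique irredundant implicational base all of whose implications $A\to b$ have $A$ a minimal generator of $b$; a minimal generator $A$ of $b$ is critical if $A\to b$ belongs to the critical base. For $j\in X$, $j^{\nearrow}$ is the set of inclusion-maximal closed sets not containing $j$. For a hypergraph $\mathcal{H}$ and $S\subseteq V(\mathcal{H})$,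 the induced hypergraph $\mathcal{H}[S]$ has vertex set $S$ and edge set $\{E\cap S: E\in\mathcal{E}(\mathcal{H})\}$; $Tr(\mathcal{H})$ is the set of inclusion-minimal vertex sets intersecting every edge. *)

(* Defs.v *)
From mathcomp Require Import all_boot.
Set Implicit Arguments. Unset Strict Implicit. Unset Printing Implicit Defensive.

Section Defs.
Variable T : finType.

Definition closure_op (phi : {set T} -> {set T}) : Prop :=
  [/\ forall A : {set T}, A \subset phi A,
      forall A B : {set T}, A \subset B -> phi A \subset phi B &
      forall A : {set T}, phi (phi A) = phi A].

Definition phi_closed (phi : {set T} -> {set T}) (S : {set T}) : bool :=
  phi S == S.

Definition standard (phi : {set T} -> {set T}) : Prop :=
  closure_op phi /\ phi set0 = set0 /\
  forall x : T, phi_closed phi (phi [set x] :\ x).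

(* unit implications A -> b are pairs (A, b) *)
Definition impl := ({set T} * T)%type.

Definition sigma_closed (Sigma : {set impl}) (S : {set T}) : bool :=
  [forall p in Sigma, ~~ (p.1 \subset S) || (p.2 \in S)].

Definition is_base (phi : {set T} -> {set T}) (Sigma : {set impl}) : Prop :=
  forall S : {set T}, sigma_closed Sigma S = phi_closed phi S.

Definition ranked (Sigma : {set impl}) : Prop :=
  exists rho : T -> nat,
    forall p, p \in Sigma -> forall a, a \in p.1 -> rho a = (rho p.2).+1.

Definition ranked_convex_geometry (phi : {set T} -> {set T}) : Prop :=
  standard phi /\ exists Sigma, is_base phi Sigma /\ ranked Sigma.

Definition min_gen (phi : {set T} -> {set T}) (A : {set T}) (b : T) : Prop :=
  b \in phi A /\ forall x, x \in A -> b \notin phi (A :\ x).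

Definition irredundant_base (phi : {set T} -> {set T}) (Sigma : {set impl}) : Prop :=
  is_base phi Sigma /\ forall p, p \in Sigma -> ~ is_base phi (Sigma :\ p).

(* the critical base (unique, by the paper) *)
Definition critical_base (phi : {set T} -> {set T}) (Sigma : {set impl}) : Prop :=
  irredundant_base phi Sigma /\ forall p, p \in Sigma -> min_gen phi p.1 p.2.

Definition critical_min_gen (phi : {set T} -> {set T}) (Sigma : {set impl})
    (A : {set T}) (b : T) : Prop :=
  min_gen phi A b /\ (A, b) \in Sigma.

Definition up_j (phi : {set T} -> {set T}) (j : T) : {set {set T}} :=
  [set M | maxset (fun M : {set T} => phi_closed phi M && (j \notin M)) M].

Definition pred_j (Sigma : {set impl}) (j : T) : {set T} :=
  [set a | [exists p in Sigma, (p.2 == j) && (a \in p.1)]].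

Record hypergraph := Hypergraph { hV : {set T}; hE : {set {set T}} }.

Definition H_j (phi : {set T} -> {set T}) (j : T) : hypergraph :=
  Hypergraph (~: \bigcap_(M in up_j phi j) M)
             [set ~: M | M in up_j phi j].

Definition induced (H : hypergraph) (S : {set T}) : hypergraph :=
  Hypergraph S [set E :&: S | E in hE H].

Definition is_transversal (H : hypergraph) (A : {set T}) : bool :=
  (A \subset hV H) && [forall E in hE H, A :&: E != set0].

Definition Tr (H : hypergraph) : {set {set T}} :=
  [set A | minset (is_transversal H) A].

End Defs.

(* Main.v *)
Require Import Defs.
From mathcomp Require Import all_boot.
Set Implicit Arguments. Unset Strict Implicit. Unset Printing Implicit Defensive.

Section Aux.
Variables (T : finType) (phi : {set T} -> {set T}).
Hypothesis hcl : closure_op phi.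

Lemma c_ext (A : {set T}) : A \subset phi A. Proof. by case: hcl. Qed.
Lemma c_mono (A B : {set T}) : A \subset B -> phi A \subset phi B. Proof. by case: hcl => _ h _; apply: h. Qed.
Lemma c_idem (A : {set T}) : phi (phi A) = phi A. Proof. by case: hcl. Qed.

Lemma closed_phi (A : {set T}) : phi_closed phi (phi A).
Proof. by rewrite /phi_closed c_idem. Qed.

Lemma closed_sub (A M : {set T}) : phi_closed phi M -> A \subset M -> phi A \subset M.
Proof. by move=> /eqP hM sAM; rewrite -hM; apply: c_mono. Qed.

Lemma base_closed (Sig : {set impl T}) (S : {set T}) : is_base phi Sig -> phi_closed phi S ->
  forall p, p \in Sig -> p.1 \subset S -> p.2 \in S.
Proof.
move=> hb hS p pS h1; move: hS; rewrite -hb => /forallP /(_ p).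
by rewrite pS h1 /=.
Qed.

Lemma base_closedI (Sig : {set impl T}) (S : {set T}) : is_base phi Sig ->
  (forall p, p \in Sig -> p.1 \subset S -> p.2 \in S) -> phi_closed phi S.
Proof.
move=> hb h; rewrite -hb; apply/forallP => p; apply/implyP => pS.
by case: (boolP (p.1 \subset S)) => //= /(h p pS).
Qed.

Lemma last_step (Sig : {set impl T}) (B : {set T}) (b : T) : is_base phi Sig -> b \in phi B -> b \notin B ->
  exists C, (C, b) \in Sig /\ C \subset phi B :\ b.
Proof.
move=> hb bB nbB.
have nc : ~~ sigma_closed Sig (phi B :\ b).
  rewrite hb; apply/negP => hc.
  have : phi B \subset phi B :\ b.
    apply: closed_sub => //; apply/subsetP => x xB; rewrite in_setD1 (subsetP (c_ext B)) //.
    by rewrite andbT; apply: contraNneq nbB => <-.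
  by move/subsetP/(_ b bB); rewrite in_setD1 eqxx.
case/forallPn: nc => p; rewrite negb_imply negb_or negbK => /andP[pS /andP[h1 h2]].
have p2 : p.2 \in phi B.
  apply: (base_closed hb (closed_phi B) pS); apply: subset_trans h1 _; apply: subsetDl.
have e : p.2 = b by apply/eqP; move: h2; rewrite in_setD1 p2 andbT negbK.
by exists p.1; split => //; rewrite -e -surjective_pairing.
Qed.

Variables (Sig' : {set impl T}) (rho : T -> nat).
Hypothesis hb' : is_base phi Sig'.
Hypothesis hrho : forall p, p \in Sig' -> forall a, a \in p.1 -> rho a = (rho p.2).+1.
Hypothesis h0 : phi set0 = set0.

Lemma prem_ne (p : impl T) : p \in Sig' -> exists a, a \in p.1.
Proof.
move=> pS; case: (set_0Vmem p.1) => [e|[a ap]]; last by exists a.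
have c0 : phi_closed phi set0 by rewrite /phi_closed h0.
by have := base_closed hb' c0 pS; rewrite e sub0set in_set0 => /(_ isT).
Qed.

Lemma layer (Y : {set T}) k : (forall y, y \in Y -> rho y = k) ->
  forall x, x \in phi Y -> k <= rho x -> x \in Y.
Proof.
move=> hY x xY kx.
pose Z := Y :|: [set z | rho z < k].
have cZ : phi_closed phi Z.
  apply: (base_closedI hb') => p pS h1.
  case: (ltnP (rho p.2) k) => hk; first by rewrite in_setU in_set hk orbT.
  case: (prem_ne pS) => a ap; have := hrho pS ap.
  move: (subsetP h1 a ap); rewrite in_setU in_set => /orP[/hY -> | ha] e.
    by move: hk; rewrite e ltnn.
  by move: ha; rewrite e ltnNge => /negP []; apply: leqW.
have : x \in Z by apply: (subsetP (closed_sub cZ (subsetUl _ _))).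
by rewrite in_setU in_set ltnNge kx orbF.
Qed.

Lemma filt (S : {set T}) k : forall x, x \in phi S -> k <= rho x ->
  x \in phi [set y in S | k <= rho y].
Proof.
move=> x xS kx.
pose Sk := [set y in S | k <= rho y].
pose Z := phi Sk :|: [set z | rho z < k].
have cZ : phi_closed phi Z.
  apply: (base_closedI hb') => p pS h1.
  case: (ltnP (rho p.2) k) => hk; first by rewrite in_setU in_set hk orbT.
  rewrite in_setU (base_closed hb' (closed_phi Sk) pS) //.
  apply/subsetP => a ap; move: (subsetP h1 a ap); rewrite in_setU in_set (hrho pS ap).
  by rewrite ltnNge (leq_trans hk (leqnSn _)) orbF.
have sSZ : S \subset Z.
  apply/subsetP => y yS; rewrite in_setU in_set.
  case: (ltnP (rho y) k) => hy; first by rewrite orbT.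
  by rewrite (subsetP (c_ext Sk)) // in_set yS hy.
have : x \in Z by apply: (subsetP (closed_sub cZ sSZ)).
by rewrite in_setU in_set ltnNge kx orbF.
Qed.

Lemma mg_rank (B : {set T}) (b : T) : min_gen phi B b -> b \notin B -> forall x, x \in B -> rho b < rho x.
Proof.
move=> [bB mB] nbB x xB.
case: (last_step hb' bB nbB) => C [CS sC].
have hC : C \subset phi [set y in B | (rho b).+1 <= rho y].
  apply/subsetP => c cC; apply: filt.
    by apply: (subsetP (subsetDl _ [set b])); apply: (subsetP sC).
  by rewrite (hrho CS cC).
have bk := base_closed hb' (closed_phi _) CS hC.
rewrite ltnNge; apply/negP => hx; apply: (negP (mB x xB)).
apply: (subsetP (c_mono _)) bk; apply/subsetP => y; rewrite inE => /andP[yB hy].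
rewrite in_setD1 yB andbT; apply/eqP => e; move: hy hx; rewrite e => h1 h2.
by move: (leq_trans h1 h2); rewrite ltnn.
Qed.

Lemma K (Sig : {set impl T}) : critical_base phi Sig ->
  forall p, p \in Sig -> forall a, a \in p.1 -> rho a = (rho p.2).+1.
Proof.
move=> [[hb hirr] hmg] [B b] pS a /= aB.
have [S [BS nbS cS]] : exists S : {set T}, [/\ B \subset S, b \notin S & sigma_closed (Sig :\ (B, b)) S].
  case: (boolP [exists S : {set T}, sigma_closed (Sig :\ (B, b)) S != phi_closed phi S]).
    case/existsP => S hS.
    have sc : sigma_closed (Sig :\ (B, b)) S.
      apply/negPn/negP => hn; have hs : sigma_closed Sig S by move: hS; rewrite (negbTE hn) -hb; case: (sigma_closed Sig S).
      apply: (negP hn); apply/forallP => q; apply/implyP => /setD1P[_ qS].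
      by move: hs; rewrite /sigma_closed => /forallP /(_ q); rewrite qS.
    have nsc : ~~ sigma_closed Sig S by move: hS; rewrite sc hb; case: (phi_closed _ _).
    case/forallPn: nsc => q; rewrite negb_imply negb_or negbK => /andP[qS /andP[q1 q2]].
    case: (eqVneq q (B, b)) => [e|ne].
      by exists S; split => //; move: q1 q2; rewrite e.
    move: sc => /forallP /(_ q); rewrite in_setD1 ne qS /= q1 /=.
    by move=> h; move: q2; rewrite h.
  move=> hn; exfalso; apply: (hirr (B, b) pS) => S.
  by move: hn; rewrite negb_exists => /forallP /(_ S); rewrite negbK => /eqP.
have nbB : b \notin B by apply: contraNN nbS => /(subsetP BS).
set r := rho b.
have bphi : b \in phi B by case: (hmg _ pS).
case: (last_step hb' bphi nbB) => C [CS sC].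
have rC : forall c, c \in C -> rho c = r.+1 by move=> c cC; apply: (hrho CS cC).
pose Z := S :|: [set z | rho z <= r].
have cZ : phi_closed phi Z.
  apply: (base_closedI hb) => q qS h1.
  case: (leqP (rho q.2) r) => hq; first by rewrite in_setU in_set hq orbT.
  have q1S : q.1 \subset S.
    apply/subsetP => y yq; move: (subsetP h1 y yq); rewrite in_setU in_set => /orP[//|hy].
    case: (eqVneq y q.2) => [e|ne]; first by move: hy; rewrite e leqNgt hq.
    have nq : q.2 \notin q.1.
      apply/negP => qq; have [_ mq] := hmg q qS; apply: (negP (mq y yq)).
      by apply: (subsetP (c_ext _)); rewrite in_setD1 eq_sym ne qq.
    have h := mg_rank (hmg q qS) nq yq.
    by move: (leq_trans (leq_trans hq (ltnW h)) hy); rewrite ltnn.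
  have qne : q != (B, b).
    apply/eqP => e; move: hq; rewrite e /= ltnn //.
  move: cS => /forallP /(_ q); rewrite in_setD1 qne qS q1S /= => h.
  by rewrite in_setU h.
have CsS : C \subset S.
  apply/subsetP => c cC.
  have : c \in Z.
    apply: (subsetP (closed_sub cZ (subset_trans BS (subsetUl _ _)))).
    by apply: (subsetP (subsetDl _ [set b])); apply: (subsetP sC).
  by rewrite in_setU in_set rC // ltnn orbF.
have bC : b \in phi C by apply: (base_closed hb' (closed_phi C) CS (c_ext C)).
have nbC : b \notin C by apply/negP => /rC; rewrite /r => /eqP; rewrite eqn_leq ltnn andbF.
case: (last_step hb bC nbC) => E [ES sE].
have nbE : b \notin E by apply/negP => /(subsetP sE); rewrite in_setD1 eqxx.
have EC : E \subset C.
  apply/subsetP => e eE; apply: (layer rC).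
    by apply: (subsetP (subsetDl _ [set b])); apply: (subsetP sE).
  exact: (mg_rank (hmg _ ES) nbE eE).
case: (eqVneq E B) => [eEB|ne].
  by apply: rC; apply: (subsetP EC); rewrite eEB.
move: cS => /forallP /(_ (E, b)); rewrite in_setD1 ES /= (subset_trans EC CsS).
rewrite andbT; have -> : ((E, b) != (B, b)) by apply: contra ne => /eqP [->].
by rewrite /= (negbTE nbS).
Qed.

End Aux.

Section Main.
Variables (T : finType) (phi : {set T} -> {set T}) (j : T).
Hypothesis hcl : closure_op phi.

Lemma trans_iff (P A : {set T}) : A \subset P ->
  Defs.is_transversal (induced (H_j phi j) P) A = (j \in phi A).
Proof.
move=> AP; rewrite /Defs.is_transversal /= AP /=.
apply/forallP/idP => [h | jA E].
  apply/negPn/negP => njA.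
  have [M hM sM] := maxset_exists (P := fun M : {set T} => phi_closed phi M && (j \notin M))
    (C := phi A) (ltac:(by rewrite /= (closed_phi hcl) njA)).
  have hin : (~: M) :&: P \in [set E :&: P | E in [set ~: M0 | M0 in up_j phi j]].
    by apply/imsetP; exists (~: M) => //; apply/imsetP; exists M => //; rewrite inE.
  have := h ((~: M) :&: P); rewrite hin /= => /negP; apply; apply/eqP/setP => x; rewrite !inE.
  case: (boolP (x \in A)) => //= xA.
  by rewrite (subsetP sM) // (subsetP (c_ext hcl A)).
apply/implyP => /imsetP [E' /imsetP [M MU ->] ->].
apply/negP => /eqP e.
move: MU; rewrite inE => /maxsetP [/andP [cM njM] _].
have sAM : A \subset M.
  apply/subsetP => x xA; apply/negPn/negP => xM.
  have : x \in A :&: (~: M :&: P) by rewrite !inE xA xM (subsetP AP).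
  by rewrite e inE.
by move: njM; rewrite (subsetP (closed_sub hcl cM sAM)).
Qed.

End Main.

Theorem theorem5 (T : finType) (phi : {set T} -> {set T}) (Sigma : {set impl T})
  (j : T) :
  ranked_convex_geometry phi ->
  critical_base phi Sigma ->
  forall A : {set T},
    critical_min_gen phi Sigma A j <->
    A \in Tr (induced (H_j phi j) (pred_j Sigma j)).
Proof.
move=> [[hcl [h0 _]] [Sig' [hb' [rho hrho]]]] hcrit A.
set P := pred_j Sigma j.
have trP : forall B : {set T}, Defs.is_transversal (induced (H_j phi j) P) B =
    (B \subset P) && (j \in phi B).
  move=> B; case: (boolP (B \subset P)) => BP; first by rewrite trans_iff.
  by rewrite /Defs.is_transversal /= (negbTE BP).
rewrite /Tr inE; split.
  move=> [[jA mA] AS].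
  have AP : A \subset P.
    by apply/subsetP => a aA; rewrite inE; apply/existsP; exists (A, j); rewrite AS eqxx aA.
  apply/minsetP; split; first by rewrite trP AP jA.
  move=> B; rewrite trP => /andP [_ jB] BA.
  apply/eqP; rewrite eqEsubset BA /=; apply/subsetP => x xA.
  apply/negPn/negP => xB; apply: (negP (mA x xA)).
  apply: (subsetP (c_mono hcl _)) jB; apply/subsetP => y yB.
  by rewrite in_setD1 (subsetP BA) // andbT; apply: contraNneq xB => <-.
move/minsetP => [] ; rewrite trP => /andP [AP jA] mA.
have mgA : min_gen phi A j.
  split => // x xA; apply/negP => jx.
  have := mA (A :\ x); rewrite trP jx andbT (subset_trans (subsetDl _ _) AP) subsetDl.
  by move=> /(_ isT isT) /setP /(_ x); rewrite in_setD1 eqxx xA.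
split => //.
have rA : forall a, a \in A -> rho a = (rho j).+1.
  move=> a aA; move: (subsetP AP a aA); rewrite inE => /existsP [q /andP [qS /andP [/eqP q2 aq]]].
  by rewrite -q2; apply: (K hcl hb' hrho h0 hcrit qS aq).
have njA : j \notin A.
  by apply/negP => /rA /eqP; rewrite eqn_leq ltnn andbF.
have [hb _] := hcrit.1.
case: (last_step hcl hb jA njA) => E [ES sE].
have EA : E \subset A.
  apply/subsetP => e eE; apply: (layer hcl hb' hrho h0 rA).
    by apply: (subsetP (subsetDl _ [set j])); apply: (subsetP sE).
  by rewrite (K hcl hb' hrho h0 hcrit ES eE).
have EP : E \subset P.
  by apply/subsetP => e eE; rewrite inE; apply/existsP; exists (E, j); rewrite ES eqxx eE.
have jE : j \in phi E by have := base_closed hb (closed_phi hcl E) ES; apply; exact: c_ext hcl E.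
have := mA E; rewrite trP EP jE => /(_ isT EA) <-.
exact: ES.
Qed.
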